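(* Let $M=\{1,\dots,m\}$ with $m\ge2$, and $t_I=\sum_{i\in I}t_i$. The rational function $$\sum_{\substack{I\sqcup J=M\\ I,J\neq\emptyset}} t_I^{|I|-2}t_J^{|J|-2}-2t_M^{m-3}\left(\frac1{t_1}+\dots+\frac1{t_m}\right)$$ (sum over ordered pairs of disjoint nonempty subsets with union $M$) is a symmetric polynomial in $t_1,\dots,t_m$ which depends only on $t_M=t_1+\dots+t_m$, i.e. it equals $F(t_1+\dots+t_m)$ for some one-variable polynomial $F$. *)

(* Defs.v *)
From HB Require Import structures.
From mathcomp Require Import all_boot all_order all_algebra.
Set Implicit Arguments. Unset Strict Implicit. Unset Printing Implicit Defensive.
Import Order.TTheory GRing.Theory Num.Theory.
Local Open Scope ring_scope.

(* t_I = sum_{i in I} t_i, for t : 'I_m -> rat (indices 0..m-1 stand for 1..m). *)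
Definition tS (m : nat) (t : 'I_m -> rat) (I : {set 'I_m}) : rat :=
  \sum_(i in I) t i.

(* The sum over ordered pairs (I,J) with
   I \sqcup J = M, I,J nonempty is the sum over I with I <> set0, I <> setT,
   and J = ~: I. *)
Definition lemma4p2_expr (m : nat) (t : 'I_m -> rat) : rat :=
  \sum_(I : {set 'I_m} | (I != set0) && (I != setT))
     (tS t I) ^ (Posz #|I| - 2) * (tS t (~: I)) ^ (Posz #|~: I| - 2)
  - 2 * (tS t setT) ^ (Posz m - 3) * \sum_(i < m) (t i)^-1.

(* Main.v *)
Require Import Defs.
From HB Require Import structures.
From mathcomp Require Import all_boot all_order all_algebra.
From mathcomp Require Import zify ring.
Import Order.TTheory GRing.Theory Num.Theory.
Local Open Scope ring_scope.

Set Implicit Arguments. Unset Strict Implicit.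

Lemma tS_split m (t : 'I_m -> rat) (A I : {set 'I_m}) :
  I \subset A -> tS t A = tS t I + tS t (A :\: I).
Proof.
move=> sIA; rewrite /tS (big_setID I) /=.
by move/setIidPr: sIA => ->.
Qed.

Lemma tS_D1 m (t : 'I_m -> rat) (A : {set 'I_m}) j :
  j \in A -> tS t A = t j + tS t (A :\ j).
Proof.
move=> jA; rewrite (@tS_split m t A [set j]) ?sub1set //.
by rewrite /tS big_set1.
Qed.

Lemma tS_U1 m (t : 'I_m -> rat) (I : {set 'I_m}) a :
  a \notin I -> tS t (a |: I) = t a + tS t I.
Proof.
move=> aI; rewrite (@tS_D1 m t _ _ (setU11 a I)); congr (_ + _).
by rewrite setU1K.
Qed.

Lemma split_sub m (A : {set 'I_m}) a (F : {set 'I_m} -> rat) :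
  a \in A ->
  \sum_(I : {set 'I_m} | I \subset A) F I =
  \sum_(I : {set 'I_m} | I \subset A :\ a) F I + \sum_(I : {set 'I_m} | I \subset A :\ a) F (a |: I).
Proof.
move=> aA; rewrite (bigID (fun I : {set 'I_m} => a \in I)) /= addrC; congr (_ + _).
  by apply: eq_bigl => I; rewrite subsetD1.
rewrite (reindex_onto (fun I : {set 'I_m} => a |: I) (fun I => I :\ a)) /=.
  apply: eq_bigl => J; rewrite subsetD1 setU11 andbT subUset sub1set aA /=.
  case aJ: (a \in J); last by rewrite setU1K ?aJ // eqxx.
  rewrite andbF; apply/negbTE; apply/negP => /andP[_ /eqP h].
  by move: aJ; rewrite -h setD11.
by move=> I /andP[_ aI]; rewrite setD1K.
Qed.

Lemma FD m (t : 'I_m -> rat) n : forall (A : {set 'I_m}) k x, #|A| = n -> (k < n)%N ->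
  \sum_(I : {set 'I_m} | I \subset A) (-1) ^+ #|A :\: I| * (x + tS t I) ^+ k = 0.
Proof.
elim: n => [|n IH] A k x hA hk //.
have [a aA] : exists a, a \in A.
  by apply/set0Pn; rewrite -card_gt0 hA.
have hA' : #|A :\ a| = n by move: hA; rewrite (cardsD1 a) aA => [[]].
rewrite (@split_sub _ _ a _ aA).
have -> : \sum_(I : {set 'I_m} | I \subset A :\ a) (-1) ^+ #|A :\: I| * (x + tS t I) ^+ k =
   - \sum_(I : {set 'I_m} | I \subset A :\ a) (-1) ^+ #|(A :\ a) :\: I| * (x + tS t I) ^+ k.
  rewrite -sumrN; apply: eq_bigr => I sI.
  have aI : a \notin I by move: sI; rewrite subsetD1 => /andP[].
  have -> : A :\: I = a |: ((A :\ a) :\: I).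
    apply/setP => i; rewrite !inE; case: (i =P a) => [->|] //=.
    by rewrite (negbTE aI) aA.
  by rewrite cardsU1 !inE eqxx andbF /= add1n exprS mulN1r mulNr.
rewrite addrC -sumrB.
transitivity (\sum_(I : {set 'I_m} | I \subset A :\ a) \sum_(i < k)
   ((-1) ^+ #|A :\ a :\: I| * (x + tS t I) ^+ (k - i.+1)) * (t a ^+ i.+1 *+ 'C(k, i.+1))).
  apply: eq_bigr => I sI.
  have aI : a \notin I by move: sI; rewrite subsetD1 => /andP[].
  have -> : A :\: (a |: I) = (A :\ a) :\: I.
    by apply/setP => i; rewrite !inE negb_or; case: (i == a); case: (i \in I); case: (i \in A).
  rewrite tS_U1 // -mulrBr (addrC (t a)) addrA exprDn big_ord_recl /=.
  rewrite subn0 expr0 mulr1 bin0 mulr1n addrAC subrr add0r mulr_sumr.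
  by apply: eq_bigr => i _; rewrite -mulrnAr mulrA.
rewrite exchange_big /=; apply: big1 => i _.
rewrite -mulr_suml IH ?mul0r //.
case: n IH hA hA' hk => [|n] IH hA hA' hk; first by case: k hk i => // ? [].
have := ltn_ord i; lia.
Qed.


Definition Kg m (t : 'I_m -> rat) (g : {set 'I_m} -> rat) (A : {set 'I_m}) (c : rat)
  : {poly rat} :=
  \sum_(I : {set 'I_m} | (I \subset A) && (I != set0))
     (g I)%:P * ('X + (c + tS t (A :\: I))%:P) ^+ #|A :\: I|.

Lemma poly_eq_deriv (p q : {poly rat}) x :
  p^`() = q^`() -> p.[x] = q.[x] -> p = q.
Proof.
move=> hd hx; apply/eqP; rewrite -subr_eq0; apply/eqP.
set r := p - q.
have rd : r^`() = 0 by rewrite /r derivB hd subrr.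
have rc : r = (r`_0)%:P.
  apply/polyP => i; rewrite coefC; case: i => [|i] //=.
  have := congr1 (fun s : {poly rat} => s`_i) rd; rewrite coef_deriv coef0 => /eqP.
  by rewrite mulrn_eq0 /= => /eqP.
have : r.[x] = 0 by rewrite /r hornerD hornerN hx subrr.
by rewrite rc hornerC => ->.
Qed.

Lemma Kg_deriv m (t : 'I_m -> rat) g A c :
  (Kg t g A c)^`() = \sum_(j in A) Kg t g (A :\ j) (c + t j).
Proof.
rewrite /Kg raddf_sum /=.
transitivity (\sum_(I : {set 'I_m} | (I \subset A) && (I != set0))
  \sum_(j in A :\: I) (g I)%:P * ('X + (c + t j + tS t ((A :\ j) :\: I))%:P) ^+ #|(A :\ j) :\: I|).
  apply: eq_bigr => I _.
  rewrite derivCE deriv_exp derivD derivX derivC addr0 mul1r.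
  rewrite -sumr_const mulr_sumr; apply: eq_bigr => j jAI.
  have -> : (A :\ j) :\: I = (A :\: I) :\ j.
    by apply/setP => i; rewrite !inE; case: (i == j); case: (i \in I).
  rewrite -addrA -tS_D1 //; congr (_ * (_ ^+ _)).
  by rewrite (cardsD1 j (A :\: I)) jAI.
rewrite (exchange_big_dep (fun j => j \in A)) /=; last first.
  by move=> I j _; rewrite inE => /andP[].
apply: eq_bigr => j jA; apply: eq_bigl => I.
rewrite subsetD1 inE; case: (I \subset A); case: (I != set0); case: (j \in I) => //=.
Qed.

Lemma Kg_eval m (t : 'I_m -> rat) g A c :
  (Kg t g A c).[- (c + tS t A)] =
  \sum_(I : {set 'I_m} | (I \subset A) && (I != set0)) g I * (- tS t I) ^+ #|A :\: I|.
Proof.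
rewrite /Kg horner_sum; apply: eq_bigr => I /andP[sIA _].
rewrite hornerM hornerC horner_exp hornerD hornerX hornerC (tS_split t sIA).
congr (_ * (_ ^+ _)); ring.
Qed.


Lemma card_split m (A I : {set 'I_m}) : I \subset A -> (#|I| + #|A :\: I|)%N = #|A|.
Proof. by move=> sIA; rewrite -(cardsID I A); move/setIidPr: sIA => ->. Qed.

Lemma FD_ne m (t : 'I_m -> rat) (A : {set 'I_m}) k :
  (k < #|A|)%N ->
  \sum_(I : {set 'I_m} | (I \subset A) && (I != set0)) (-1) ^+ #|A :\: I| * tS t I ^+ k
  = - ((-1) ^+ #|A| * 0 ^+ k).
Proof.
move=> hk; have := @FD m t _ A k 0 (erefl #|A|) hk.
rewrite (bigD1 set0) ?sub0set //= setD0 /tS big_set0 add0r.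
under eq_bigr do rewrite add0r.
by move/eqP; rewrite addrC addr_eq0 => /eqP.
Qed.

Definition g1 m (t : 'I_m -> rat) (I : {set 'I_m}) : rat := tS t I ^+ (#|I|.-1).
Definition R1 m (t : 'I_m -> rat) (A : {set 'I_m}) (c : rat) : {poly rat} :=
  (#|A|)%:R *: ('X + (c + tS t A)%:P) ^+ (#|A|.-1).

Lemma Kg_empty m (t : 'I_m -> rat) g (A : {set 'I_m}) c : #|A| = 0%N -> Kg t g A c = 0.
Proof.
move/eqP; rewrite cards_eq0 => /eqP ->.
by apply: big1 => I /andP[]; rewrite subset0 => ->.
Qed.

Lemma K1 m (t : 'I_m -> rat) n : forall (A : {set 'I_m}) c, #|A| = n -> Kg t (g1 t) A c = R1 t A c.
Proof.
elim: n => [|n IH] A c hA.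
  by rewrite Kg_empty // /R1 hA scale0r.
apply: (@poly_eq_deriv _ _ (- (c + tS t A))).
  rewrite Kg_deriv.
  transitivity (\sum_(j in A) (n%:R *: ('X + (c + tS t A)%:P) ^+ n.-1)).
    apply: eq_bigr => j jA.
    have hj : #|A :\ j| = n by move: hA; rewrite (cardsD1 j) jA => [[]].
    by rewrite IH // /R1 hj -addrA -tS_D1.
  rewrite sumr_const hA /R1 hA derivZ deriv_exp derivD derivX derivC addr0 mul1r /=.
  rewrite -!mul_polyC -mulr_natr -mulrnAr -mulr_natr !polyC_natr; ring.
rewrite Kg_eval /R1 hornerZ horner_exp hornerD hornerX hornerC hA /= addNr.
transitivity (\sum_(I : {set 'I_m} | (I \subset A) && (I != set0))
   (-1) ^+ #|A :\: I| * tS t I ^+ n).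
  apply: eq_bigr => I /andP[sIA nI].
  rewrite /g1 (exprNn (tS t I)) mulrCA -exprD; congr (_ * (_ ^+ _)).
  have := card_split sIA; rewrite hA.
  have : (0 < #|I|)%N by rewrite card_gt0.
  by case: (#|I|) => // k _; rewrite addSn => -[].
rewrite FD_ne hA //.
by case: n {IH hA} => [|n]; rewrite ?expr0 ?expr0n /=; ring.
Qed.


Lemma powz_nat (x : rat) (a e N : nat) : (0 < a)%N -> (a + e = N.+2)%N ->
  (a = 1%N -> x != 0) -> x ^ (Posz a - 2) * x ^+ e = x ^+ N.
Proof.
case: a => [|[|a]] // _ hae hx.
  have -> : x ^ (Posz 1 - 2) = x ^ (-1) by [].
  move: hae; rewrite add1n => -[->]; rewrite exprN1 exprS mulKf //; exact: hx.
have -> : Posz a.+2 - 2 = Posz a by rewrite -addn2 PoszD addrK.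
by rewrite -exprnP -exprD; congr (_ ^+ _); move: hae; rewrite !addSn => -[].
Qed.

Definition g2 m (t : 'I_m -> rat) (I : {set 'I_m}) : rat := tS t I ^ (Posz #|I| - 2).
Definition sinv m (t : 'I_m -> rat) (A : {set 'I_m}) : rat := \sum_(i in A) (t i)^-1.
Definition hb (n : nat) : rat := (muln n n.-1)%:R / 2.

Lemma hb0 : hb 0 = 0. Proof. by rewrite /hb mul0n mul0r. Qed.

Definition R2 m (t : 'I_m -> rat) (A : {set 'I_m}) (c : rat) : {poly rat} :=
  ('X + (c + tS t A)%:P) ^+ (#|A|.-1) * (sinv t A)%:P
  - (hb #|A|)%:P * ('X + (c + tS t A)%:P) ^+ (#|A|.-2).

Lemma sinv_sum m (t : 'I_m -> rat) (A : {set 'I_m}) n : #|A| = n.+1 ->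
  \sum_(j in A) sinv t (A :\ j) = n%:R * sinv t A.
Proof.
move=> hA.
transitivity (\sum_(j in A) (sinv t A - (t j)^-1)).
  by apply: eq_bigr => j jA; rewrite /sinv (big_setD1 _ jA) /= addrC addrK.
rewrite sumrB sumr_const hA -/(sinv t A) -mulr_natl mulrSr; ring.
Qed.

Lemma polyC_sumA m (A : {set 'I_m}) (F : 'I_m -> rat) :
  \sum_(i in A) (F i)%:P = (\sum_(i in A) F i)%:P.
Proof. by elim/big_rec2: _ => [|i x y _ ->]; rewrite ?polyC0 ?polyCD. Qed.

Lemma K2 m (t : 'I_m -> rat) (ht : forall i, t i != 0) n :
  forall (A : {set 'I_m}) c, #|A| = n -> Kg t (g2 t) A c = R2 t A c.
Proof.
elim: n => [|n IH] A c hA.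
  rewrite Kg_empty //; move/eqP: hA; rewrite cards_eq0 => /eqP ->.
  by rewrite /R2 cards0 /sinv big_set0 hb0 polyC0 mulr0 mul0r subr0.
apply: (@poly_eq_deriv _ _ (- (c + tS t A))).
  rewrite Kg_deriv.
  set P := ('X + (c + tS t A)%:P).
  transitivity (\sum_(j in A) (P ^+ n.-1 * (sinv t (A :\ j))%:P
      - (hb n)%:P * P ^+ n.-2)).
    apply: eq_bigr => j jA.
    have hj : #|A :\ j| = n by move: hA; rewrite (cardsD1 j) jA => [[]].
    by rewrite IH // /R2 hj -addrA -tS_D1.
  rewrite sumrB -mulr_sumr sumr_const hA polyC_sumA (sinv_sum t hA).
  rewrite /R2 hA -/P.
  have dP : P^`() = 1 by rewrite /P derivD derivX derivC addr0.
  rewrite derivB derivM (derivC (sinv t A)) mulr0 addr0 derivM (derivC (hb n.+1)) mul0r add0r.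
  rewrite !deriv_exp dP !mul1r !succnK (polyCM (n%:R) (sinv t A)) (polyC_natr _ n).
  rewrite -[(hb n)%:P * _ *+ n.+1]mulr_natr -[P ^+ n.-1 *+ n]mulr_natr.
  rewrite -[P ^+ n.-2 *+ n.-1]mulr_natr.
  have hbP : (hb n.+1)%:P * (n.-1)%:R = (hb n)%:P * (n.+1)%:R :> {poly rat}.
    by rewrite -!polyC_natr -!polyCM /hb !natrM; congr (_ %:P); ring.
  rewrite (mulrC (P ^+ n.-2) (n.-1)%:R) [(hb n.+1)%:P * (_ * _)]mulrA hbP; ring.
have hP : ('X + (c + tS t A)%:P).[- (c + tS t A)] = 0.
  by rewrite hornerD hornerX hornerC addNr.
rewrite Kg_eval /R2 hA hornerD hornerN !hornerM !hornerC !horner_exp hP.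
case: n IH hA => [|k] IH hA.
  have [a ->] : exists a, A = [set a] by apply/cards1P; rewrite hA.
  rewrite (eq_bigl (pred1 [set a])); last first.
    move=> I; rewrite subset1 /=; case: eqP => [->|_] /=.
      by apply/set0Pn; exists a; rewrite set11.
    by case: (I == set0).
  rewrite big_pred1_eq setDv cards0 /= /sinv big_set1 /g2 cards1 /tS big_set1.
  have -> : hb 1 = 0 by [].
  have -> : t a ^ (1%Z - 2) = t a ^ (-1) by [].
  by rewrite exprN1 !expr0; ring.
transitivity (\sum_(I : {set 'I_m} | (I \subset A) && (I != set0))
   (-1) ^+ #|A :\: I| * tS t I ^+ k).
  apply: eq_bigr => I /andP[sIA nI].
  rewrite /g2 (exprNn (tS t I)) mulrCA (@powz_nat _ _ _ k) //.
  - by rewrite card_gt0.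
  - by rewrite card_split // hA.
  move=> /eqP /cards1P [i ->]; rewrite /tS big_set1; exact: ht.
rewrite FD_ne hA //.
case: k {IH hA} => [|k]; last by rewrite !expr0n /= mulr0 !mul0r mulr0 subrr oppr0.
by rewrite /hb /= !expr0 mulr1 mul0r; ring.
Qed.


Definition Pab m (t : 'I_m -> rat) (a b : int) : rat :=
  \sum_(I : {set 'I_m} | (I != set0) && (I != setT))
     tS t I ^ (Posz #|I| - a) * tS t (~: I) ^ (Posz #|~: I| - b).

Lemma Pab_sym m (t : 'I_m -> rat) a b : Pab t a b = Pab t b a.
Proof.
rewrite /Pab (reindex_inj (@setC_inj _)) /=.
apply: eq_big => I.
  rewrite -[in X in X && _]setCT -[in X in _ && X]setC0 !(inj_eq (@setC_inj _)).
  by rewrite andbC.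
by rewrite setCK mulrC.
Qed.

Lemma powzS (x : rat) (z : int) : (x != 0) || (0 <= z) -> x ^ z * x = x ^ (z + 1).
Proof.
case/orP => h.
  by rewrite expfzDr // expr1z.
by rewrite exprzD_ss ?h // expr1z.
Qed.

Lemma nonneg_or m (t : 'I_m -> rat) (ht : forall i, t i != 0) (I : {set 'I_m}) (a : int) :
  I != set0 -> a <= 2 -> (tS t I != 0) || (0 <= Posz #|I| - a).
Proof.
move=> nI ha; have : (0 < #|I|)%N by rewrite card_gt0.
case hI : #|I| => [|[|k]] // _.
  apply/orP; left; move/eqP: hI => /cards1P [i ->]; rewrite /tS big_set1; exact: ht.
apply/orP; right; rewrite subr_ge0; apply: le_trans ha _.
by rewrite -[2]/(Posz 2) lez_nat.
Qed.

Lemma Pab_rel m (t : 'I_m -> rat) (ht : forall i, t i != 0) a b :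
  a <= 2 -> b <= 2 ->
  tS t setT * Pab t a b = Pab t (a - 1) b + Pab t a (b - 1).
Proof.
move=> ha hb; rewrite /Pab mulr_sumr -big_split /=; apply: eq_bigr => I /andP[nI nT].
have nC : ~: I != set0 by rewrite -setCT (inj_eq (@setC_inj _)).
rewrite (@tS_split _ t setT I) ?subsetT // setTD mulrDl.
have e1 : Posz #|I| - (a - 1) = (Posz #|I| - a) + 1 by ring.
have e2 : Posz #|~: I| - (b - 1) = (Posz #|~: I| - b) + 1 by ring.
rewrite e1 e2 -!powzS ?nonneg_or //; ring.
Qed.


Lemma Kg_T0 m (t : 'I_m -> rat) g : (0 < m)%N ->
  (Kg t g setT 0).[0] = g setT +
   \sum_(I : {set 'I_m} | (I != set0) && (I != setT)) g I * tS t (~: I) ^+ #|~: I|.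
Proof.
move=> m0; rewrite /Kg horner_sum (bigD1 setT) /=; last first.
  by rewrite subxx; apply/set0Pn; exists (Ordinal m0); rewrite inE.
rewrite hornerM hornerC horner_exp hornerD hornerX hornerC setDv cards0 expr0 mulr1.
congr (_ + _); apply: eq_big => [I|I _]; first by rewrite subsetT.
by rewrite hornerM hornerC horner_exp hornerD hornerX hornerC setTD !add0r.
Qed.

Lemma P10_eq m (t : 'I_m -> rat) :
  Pab t 1 0 = \sum_(I : {set 'I_m} | (I != set0) && (I != setT)) g1 t I * tS t (~: I) ^+ #|~: I|.
Proof.
apply: eq_bigr => I /andP[nI _]; rewrite /g1 subr0 -exprnP.
have : (0 < #|I|)%N by rewrite card_gt0.
case: #|I| => // k _.
have -> : Posz k.+1 - 1 = Posz k by rewrite -addn1 PoszD addrK.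
by rewrite -exprnP.
Qed.

Lemma P20_eq m (t : 'I_m -> rat) :
  Pab t 2 0 = \sum_(I : {set 'I_m} | (I != set0) && (I != setT)) g2 t I * tS t (~: I) ^+ #|~: I|.
Proof. by apply: eq_bigr => I _; rewrite /g2 subr0 -exprnP. Qed.

Unset Implicit Arguments. Set Strict Implicit.

Lemma hpm1 m : (2 <= m)%N -> m.-1 = (m.-2).+1.
Proof. by case: m => [|[|m]]. Qed.
Lemma hpm m : (2 <= m)%N -> m = (m.-2).+2.
Proof. by case: m => [|[|m]]. Qed.
Lemma pz2 m : (2 <= m)%N -> Posz m - 2 = Posz m.-2.
Proof.
case: m => [|[|m]] // _.
by rewrite (_ : Posz m.+2 = Posz m + 2) ?addrK // -PoszD addn2.
Qed.
Lemma pz3 m (s : rat) : s != 0 -> s ^+ 3 * s ^ (Posz m - 3) = s ^+ m.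
Proof. by move=> hs; rewrite exprnP -expfzDr // addrC subrK. Qed.
Lemma coefF m (s : rat) : (2 <= m)%N ->
  (muln (m - 2) (m - 3))%:R * s ^+ (m - 4) * s ^+ 3 = (muln (m - 2) (m - 3))%:R * s ^+ m.-1.
Proof.
case: m => [|[|[|[|m]]]] // _; rewrite ?muln0 ?mul0n ?mulr0n ?mul0r //.
have -> : (m.+4 - 4 = m)%N by rewrite !subSS subn0.
by rewrite -mulrA -exprD addn3.
Qed.
Lemma coefR m : (2 <= m)%N -> (muln (m - 2) (m - 3))%:R = (m%:R - 2) * (m%:R - 3) :> rat.
Proof.
case: m => [|[|[|m]]] // _.
rewrite !subSS !subn0 natrM -!natr1; ring.
Qed.
Lemma hbR m : (1 <= m)%N -> hb m = m%:R * (m%:R - 1) / 2.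
Proof. by case: m => [|m] // _; rewrite /hb natrM /= -natr1 addrK. Qed.

Theorem lemma4p2 (m : nat) (hm : (2 <= m)%N) :
  exists F : {poly rat},
    forall t : 'I_m -> rat,
      (forall i, t i != 0) -> tS t setT != 0 ->
      lemma4p2_expr t = F.[tS t setT].
Proof.
exists (- ((muln (m-2) (m-3))%:R *: 'X^(m-4))).
move=> t ht hs.
have cT : #|[set: 'I_m]| = m by rewrite cardsT card_ord.
have m0 : (0 < m)%N by case: m hm {t ht hs cT}.
set s := tS t setT.
have h1 := congr1 (fun p => p.[0]) (K1 t 0 cT).
rewrite /= Kg_T0 // -P10_eq /R1 hornerZ horner_exp hornerD hornerX hornerC cT in h1.
rewrite /g1 cT !add0r -/s in h1.
have h2 := congr1 (fun p => p.[0]) (K2 ht 0 cT).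
rewrite /= Kg_T0 // -P20_eq /R2 hornerD hornerN !hornerM !horner_exp !hornerD !hornerX !hornerC cT in h2.
rewrite /g2 cT !add0r -/s in h2.
have E : lemma4p2_expr t = Pab t 2 2 - 2 * s ^ (Posz m - 3) * sinv t setT.
  rewrite /lemma4p2_expr /sinv; congr (_ - _ * _); apply: eq_bigl => i.
  by rewrite in_setT.
have A11 : s * Pab t 1 1 = 2 * Pab t 1 0.
  have := Pab_rel ht (a:=1) (b:=1) isT isT; rewrite subrr -/s => ->.
  by rewrite Pab_sym; ring.
have A21 : s * Pab t 2 1 = Pab t 1 1 + Pab t 2 0.
  by have := Pab_rel ht (a:=2) (b:=1) isT isT; rewrite subrr -/s => ->.
have A22 : s * Pab t 2 2 = 2 * Pab t 2 1.
  have := Pab_rel ht (a:=2) (b:=2) isT isT; rewrite -/s => ->.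
  by rewrite (Pab_sym t (2 - 1)); ring.
have A3 : s ^+ 3 * Pab t 2 2 = 4 * Pab t 1 0 + 2 * s * Pab t 2 0.
  transitivity (s ^+ 2 * (s * Pab t 2 2)); first by ring.
  rewrite A22; transitivity (2 * s * (s * Pab t 2 1)); first by ring.
  rewrite A21; transitivity (2 * (s * Pab t 1 1) + 2 * s * Pab t 2 0); first by ring.
  by rewrite A11; ring.
rewrite E.
clear E A11 A21 A22.
rewrite hornerN hornerZ hornerXn.
apply: (mulfI (expf_neq0 3 hs)).
rewrite mulrBr A3.
have -> : s ^+ 3 * (2 * s ^ (Posz m - 3) * sinv t setT) =
  2 * (s ^+ 3 * s ^ (Posz m - 3)) * sinv t setT by ring.
rewrite pz3 //.
have -> : s ^+ 3 * - ((muln (m - 2) (m - 3))%:R * s ^+ (m - 4)) =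
   - ((muln (m - 2) (m - 3))%:R * s ^+ (m - 4) * s ^+ 3) by ring.
rewrite coefF // coefR //.
rewrite pz2 // -exprnP in h2.
have e10 : Pab t 1 0 = m%:R * s ^+ m.-1 - s ^+ m.-1 by rewrite -h1; ring.
have e20 : Pab t 2 0 = s ^+ m.-1 * sinv t setT - hb m * s ^+ m.-2 - s ^+ m.-2.
  by rewrite -h2; ring.
rewrite e10 e20 hbR 1?ltnW // (@hpm1 m hm).
rewrite [s ^+ m](_ : _ = s ^+ (m.-2).+2); last by rewrite -hpm.
rewrite !exprS.
by field.
Qed.
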